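(* Let $A\subset\mathbb R^\tau$ be a compact max-min convex set and let $\xi\colon J(A)\to A$ be the max-min barycenter map $\xi(\mu)=(\mu(p_\alpha))_{\alpha<\tau}$. Then $(A,\xi)$ is a $\mathbb J$-algebra, i.e. $\xi\circ\eta_A=1_A$ and $\xi\circ\psi_A=\xi\circ J(\xi)$.
   Context: A max-min measure on a compact Hausdorff space $X$ is a functional $\mu\colon C(X)\to\mathbb R$ (not assumed continuous) with $\mu(c_X)=c$ for constants, $\mu(\varphi\vee\psi)=\mu(\varphi)\vee\mu(\psi)$, $\mu(c\wedge\varphi)=c\wedge\mu(\varphi)$ for $c\in\mathbb R$; $J(X)$ is the set of max-min measures with the topology of pointwise convergence on $C(X)$; for continuous $f$, $J(f)(\mu)(\varphi)=\mu(\varphi\circ f)$. $\eta_X(x)=\delta_x$ with $\delta_x(\varphi)=\varphi(x)$; $\psi_X\colon J(J(X))\to J(X)$ is $\psi_X(M)(\varphi)=M(\bar\varphi)$, $\bar\varphi(\mu)=\mu(\varphi)$. $p_\alpha\colon A\to\mathbb R$ is the $\alpha$-th coordinate projection. A subset $A\subset\mathbb R^\tau$ is max-min convex if $x\vee(\lambda\wedge y)\in A$ for all $x,y\in A$, $\lambda\in\mathbb R$ (coordinatewise operations); for such compact $A$, $\xi$ takes values in $A$. *)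

(* Defs.v *)
From Stdlib Require Import Reals List.
Open Scope R_scope.

(* A "space" is described by a carrier type S, a subset D : S -> Prop, and a
   family G of real-valued generating maps on S; D carries the initial
   (weak) topology induced by G (subspace topology). *)

Definition open_in {S : Type} (D : S -> Prop) (G : (S -> R) -> Prop)
  (U : S -> Prop) : Prop :=
  forall x, D x -> U x ->
    exists (l : list (S -> R)) (d : R),
      Forall G l /\ 0 < d /\
      forall y, D y -> (forall g, In g l -> Rabs (g y - g x) < d) -> U y.

Definition compact_in {S : Type} (D : S -> Prop) (G : (S -> R) -> Prop) : Prop :=
  forall (Idx : Type) (U : Idx -> S -> Prop),
    (forall i, open_in D G (U i)) ->
    (forall x, D x -> exists i, U i x) ->
    exists l : list Idx, forall x, D x -> exists i, In i l /\ U i x.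

Definition cont_map {S T : Type} (D : S -> Prop) (G : (S -> R) -> Prop)
  (D' : T -> Prop) (G' : (T -> R) -> Prop) (f : S -> T) : Prop :=
  (forall x, D x -> D' (f x)) /\
  forall U, open_in D' G' U -> open_in D G (fun x => U (f x)).

Definition Rdom : R -> Prop := fun _ => True.
Definition Rgen : (R -> R) -> Prop := fun g => g = (fun t => t).

Definition Ccont {S : Type} (D : S -> Prop) (G : (S -> R) -> Prop) (phi : S -> R) : Prop :=
  cont_map D G Rdom Rgen phi.

(* max-min measures; a functional on C(X) is represented by a total map
   (S -> R) -> R whose values only matter on continuous functions, and which
   depends only on the restriction of phi to X. *)
Definition is_maxmin {S : Type} (D : S -> Prop) (G : (S -> R) -> Prop)
  (mu : (S -> R) -> R) : Prop :=
  (forall phi psi, Ccont D G phi -> Ccont D G psi ->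
      (forall x, D x -> phi x = psi x) -> mu phi = mu psi) /\
  (forall c : R, mu (fun _ => c) = c) /\
  (forall phi psi, Ccont D G phi -> Ccont D G psi ->
      mu (fun x => Rmax (phi x) (psi x)) = Rmax (mu phi) (mu psi)) /\
  (forall (c : R) phi, Ccont D G phi ->
      mu (fun x => Rmin c (phi x)) = Rmin c (mu phi)).

(* J(X): carrier is_maxmin D G, with the topology of pointwise convergence on C(X) *)
Definition Jdom {S : Type} (D : S -> Prop) (G : (S -> R) -> Prop) :
  ((S -> R) -> R) -> Prop := is_maxmin D G.
Definition Jgen {S : Type} (D : S -> Prop) (G : (S -> R) -> Prop) :
  (((S -> R) -> R) -> R) -> Prop :=
  fun h => exists phi, Ccont D G phi /\ h = (fun mu => mu phi).

Definition eta {S : Type} (x : S) : (S -> R) -> R := fun phi => phi x.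
Definition psiJ {S : Type} (M : (((S -> R) -> R) -> R) -> R) : (S -> R) -> R :=
  fun phi => M (fun mu => mu phi).
Definition Jmap {S T : Type} (f : S -> T) (mu : (S -> R) -> R) : (T -> R) -> R :=
  fun phi => mu (fun x => phi (f x)).

(* R^tau with the product topology: generated by coordinate projections *)
Definition coord_gen (I : Type) : ((I -> R) -> R) -> Prop :=
  fun g => exists a : I, g = (fun x => x a).

Definition maxmin_convex {I : Type} (A : (I -> R) -> Prop) : Prop :=
  forall x y, A x -> A y -> forall lam : R,
    A (fun a => Rmax (x a) (Rmin lam (y a))).

Definition xi {I : Type} (mu : ((I -> R) -> R) -> R) : I -> R :=
  fun a => mu (fun x => x a).

(* Main.v *)
Require Import Defs.
From Stdlib Require Import Reals List Lra Classical FunctionalExtensionality.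
Open Scope R_scope.

Definition ed {Ix : Type} (A : (Ix -> R) -> Prop) (f : (Ix -> R) -> R) : Prop :=
  forall x, A x -> forall e, 0 < e -> exists (l : list ((Ix -> R) -> R)) (d : R),
    Forall (coord_gen Ix) l /\ 0 < d /\
    forall y, A y -> (forall g, In g l -> Rabs (g y - g x) < d) -> Rabs (f y - f x) < e.

Lemma ed_Ccont {Ix} (A : (Ix->R)->Prop) f : ed A f -> Ccont A (coord_gen Ix) f.
Proof.
  intros H. split. { intros; exact Logic.I. }
  intros U HU x Hx Ux.
  destruct (HU (f x) Logic.I Ux) as [l0 [d0 [Hl0 [Hd0 HU0]]]].
  destruct (H x Hx d0 Hd0) as [l [d [Hl [Hd Hy]]]].
  exists l, d. split; [|split]; auto.
  intros y Hy' Hc. apply HU0; [exact Logic.I|].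
  intros g Hg. rewrite Forall_forall in Hl0. specialize (Hl0 g Hg). unfold Rgen in Hl0.
  subst g. apply Hy; auto.
Qed.

Lemma Ccont_ed {Ix} (A : (Ix->R)->Prop) f : Ccont A (coord_gen Ix) f -> ed A f.
Proof.
  intros [_ H] x Hx e He.
  set (U := fun t => Rabs (t - f x) < e).
  assert (HU : open_in Rdom Rgen U).
  { intros t _ Ht. exists ((fun u => u) :: nil), (e - Rabs (t - f x)).
    split; [constructor; [reflexivity|constructor]|split; [unfold U in Ht; lra|]].
    intros y _ Hy. specialize (Hy (fun u => u) (or_introl eq_refl)). simpl in Hy.
    unfold U. pose proof (Rabs_triang (y - t) (t - f x)) as T.
    replace (y - t + (t - f x)) with (y - f x) in T by ring. lra. }
  assert (Hfx : U (f x)). { unfold U. replace (f x - f x) with 0 by ring. rewrite Rabs_R0. exact He. }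
  destruct (H U HU x Hx Hfx) as [l [d [Hl [Hd Hy]]]].
  exists l, d. split; [|split]; auto.
Qed.

Lemma ed_const {Ix} (A : (Ix->R)->Prop) (b : R) : ed A (fun _ => b).
Proof.
  intros x Hx e He. exists nil, 1. split; [constructor|split; [lra|]].
  intros. replace (b - b) with 0 by ring. rewrite Rabs_R0. exact He.
Qed.

Lemma ed_proj {Ix} (A : (Ix->R)->Prop) (a : Ix) : ed A (fun y => y a).
Proof.
  intros x Hx e He. exists ((fun y => y a) :: nil), e.
  split; [constructor; [exists a; reflexivity|constructor]|split; [exact He|]].
  intros y _ Hy. apply (Hy (fun y => y a)). left; reflexivity.
Qed.

Lemma ed_comp1 {Ix} (A : (Ix->R)->Prop) g (f : R -> R) L :
  ed A g -> 0 < L -> (forall u v, Rabs (f u - f v) <= L * Rabs (u - v)) ->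
  ed A (fun y => f (g y)).
Proof.
  intros Hg HL Hf x Hx e He.
  assert (He' : 0 < e / L) by (apply Rdiv_lt_0_compat; lra).
  destruct (Hg x Hx _ He') as [l [d [Hl [Hd Hy]]]].
  exists l, d. split; [|split]; auto.
  intros y Ay Hc. specialize (Hy y Ay Hc). eapply Rle_lt_trans; [apply Hf|].
  apply Rmult_lt_compat_l with (r := L) in Hy; auto.
  replace (L * (e / L)) with e in Hy by (field; lra). exact Hy.
Qed.

Lemma ed_comp2 {Ix} (A : (Ix->R)->Prop) g1 g2 (op : R -> R -> R) :
  ed A g1 -> ed A g2 ->
  (forall u v u' v', Rabs (op u v - op u' v') <= Rmax (Rabs (u - u')) (Rabs (v - v'))) ->
  ed A (fun y => op (g1 y) (g2 y)).
Proof.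
  intros H1 H2 Hop x Hx e He.
  destruct (H1 x Hx e He) as [l1 [d1 [Hl1 [Hd1 Hy1]]]].
  destruct (H2 x Hx e He) as [l2 [d2 [Hl2 [Hd2 Hy2]]]].
  exists (l1 ++ l2), (Rmin d1 d2). split; [apply Forall_app; auto|split].
  { apply Rmin_glb_lt; auto. }
  intros y Ay Hc. eapply Rle_lt_trans; [apply Hop|]. apply Rmax_lub_lt.
  - apply Hy1; auto. intros g Hg. eapply Rlt_le_trans; [apply Hc; apply in_or_app; auto|apply Rmin_l].
  - apply Hy2; auto. intros g Hg. eapply Rlt_le_trans; [apply Hc; apply in_or_app; auto|apply Rmin_r].
Qed.

Lemma Rmax_lip u v u' v' : Rabs (Rmax u v - Rmax u' v') <= Rmax (Rabs (u-u')) (Rabs (v-v')).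
Proof. unfold Rmax; repeat destruct Rle_dec; unfold Rabs in *; repeat destruct Rcase_abs; lra. Qed.

Lemma Rmin_lip u v u' v' : Rabs (Rmin u v - Rmin u' v') <= Rmax (Rabs (u-u')) (Rabs (v-v')).
Proof. unfold Rmax, Rmin; repeat destruct Rle_dec; unfold Rabs in *; repeat destruct Rcase_abs; lra. Qed.

Definition hfun (a K t : R) : R := t + K * Rmax 0 (t - a).

Lemma hfun_lip a K : 0 <= K -> forall u v, Rabs (hfun a K u - hfun a K v) <= (1 + K) * Rabs (u - v).
Proof.
  intros HK u v. unfold hfun.
  assert (Hm : Rabs (Rmax 0 (u - a) - Rmax 0 (v - a)) <= Rabs (u - v)).
  { unfold Rmax; repeat destruct Rle_dec; unfold Rabs; repeat destruct Rcase_abs; lra. }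
  replace (u + K * Rmax 0 (u - a) - (v + K * Rmax 0 (v - a)))
    with ((u - v) + K * (Rmax 0 (u - a) - Rmax 0 (v - a))) by ring.
  eapply Rle_trans; [apply Rabs_triang|]. rewrite Rabs_mult, (Rabs_pos_eq K HK).
  assert (K * Rabs (Rmax 0 (u - a) - Rmax 0 (v - a)) <= K * Rabs (u - v))
    by (apply Rmult_le_compat_l; auto). lra.
Qed.

Lemma Ccont_max {Ix} (A : (Ix->R)->Prop) f g :
  Ccont A (coord_gen Ix) f -> Ccont A (coord_gen Ix) g -> Ccont A (coord_gen Ix) (fun y => Rmax (f y) (g y)).
Proof. intros; apply ed_Ccont, ed_comp2; try apply Ccont_ed; auto. apply Rmax_lip. Qed.

Lemma Ccont_minc {Ix} (A : (Ix->R)->Prop) s f :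
  Ccont A (coord_gen Ix) f -> Ccont A (coord_gen Ix) (fun y => Rmin s (f y)).
Proof. intros; apply ed_Ccont, (ed_comp2 A (fun _ => s)); [apply ed_const|apply Ccont_ed; auto|apply Rmin_lip]. Qed.

Lemma mm_mono {Ix} (A : (Ix->R)->Prop) mu phi psi :
  is_maxmin A (coord_gen Ix) mu -> Ccont A (coord_gen Ix) phi -> Ccont A (coord_gen Ix) psi ->
  (forall x, A x -> phi x <= psi x) -> mu phi <= mu psi.
Proof.
  intros [H1 [H2 [H3 H4]]] Hp Hq Hle.
  assert (E : mu (fun x => Rmax (phi x) (psi x)) = mu psi).
  { apply H1; [apply Ccont_max; auto| auto |]. intros x Hx. apply Rmax_right. auto. }
  rewrite H3 in E by auto. rewrite <- E. apply Rmax_l.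
Qed.

Lemma mm_cut {Ix} (A : (Ix->R)->Prop) mu psi phi s :
  is_maxmin A (coord_gen Ix) mu -> Ccont A (coord_gen Ix) psi -> Ccont A (coord_gen Ix) phi ->
  mu phi < s -> (forall x, A x -> Rmin (psi x) s <= phi x) -> mu psi <= mu phi.
Proof.
  intros Hm Hpsi Hphi Hs Hle.
  pose proof (mm_mono A mu (fun x => Rmin s (psi x)) phi Hm (Ccont_minc A s psi Hpsi) Hphi) as M.
  assert (M' : mu (fun x => Rmin s (psi x)) <= mu phi).
  { apply M. intros x Hx. rewrite Rmin_comm. auto. }
  destruct Hm as [_ [_ [_ H4]]]. rewrite H4 in M' by auto.
  unfold Rmin in M'. destruct Rle_dec; lra.
Qed.

Fixpoint phiS {Ix} (c : Ix -> R) (d s b : R) (S : list Ix) (y : Ix -> R) : R :=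
  match S with
  | nil => b
  | j :: S' => Rmax (hfun (c j + d/2) (2 * Rabs (s - c j) / d) (y j)) (phiS c d s b S' y)
  end.

Lemma phiS_ed {Ix} (A : (Ix->R)->Prop) c d s b S : 0 < d -> ed A (phiS c d s b S).
Proof.
  intros Hd. induction S as [|j S IH].
  - change (ed A (fun _ => b)). apply ed_const.
  - change (ed A (fun y => Rmax (hfun (c j + d/2) (2 * Rabs (s - c j) / d) (y j)) (phiS c d s b S y))).
    apply ed_comp2; auto; [|apply Rmax_lip].
    assert (HK : 0 <= 2 * Rabs (s - c j) / d).
    { apply Rmult_le_pos; [|left; apply Rinv_0_lt_compat; auto].
      pose proof (Rabs_pos (s - c j)); lra. }
    apply (ed_comp1 A (fun y => y j) _ (1 + 2 * Rabs (s - c j) / d)).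
    + apply ed_proj.
    + lra.
    + apply hfun_lip; auto.
Qed.

Lemma mm_h {Ix} (A : (Ix->R)->Prop) mu j a K :
  is_maxmin A (coord_gen Ix) mu -> mu (fun y => y j) < a -> 0 <= K ->
  mu (fun y => hfun a K (y j)) <= mu (fun y => y j).
Proof.
  intros Hm Ha HK. apply (mm_cut A mu _ _ a Hm); auto.
  - apply ed_Ccont, (ed_comp1 A (fun y => y j) _ (1 + K)); [apply ed_proj|lra|apply hfun_lip; auto].
  - apply ed_Ccont, ed_proj.
  - intros y _. unfold hfun. destruct (Rle_dec (y j) a).
    + rewrite Rmax_left by lra. rewrite Rmult_0_r, Rplus_0_r. apply Rmin_l.
    + eapply Rle_trans; [apply Rmin_r|]. lra.
Qed.

Lemma bound {Ix} (A : (Ix -> R) -> Prop) mu psi (S : list Ix) d b s :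
  is_maxmin A (coord_gen Ix) mu -> Ccont A (coord_gen Ix) psi -> 0 < d -> b < s ->
  (forall j, In j S -> mu (fun y => y j) < s) ->
  (forall y, A y -> psi y <= b \/ exists j, In j S /\ mu (fun z => z j) + d < y j) ->
  mu psi < s.
Proof.
  intros Hm Hpsi Hd Hbs HS Hcov.
  set (c := fun j => mu (fun z : Ix -> R => z j)).
  set (phi := phiS c d s b S).
  assert (Hphi : Ccont A (coord_gen Ix) phi) by (apply ed_Ccont, phiS_ed; auto).
  assert (Hlt : mu phi < s).
  { unfold phi. clear Hcov. induction S as [|j S IH].
    - change (mu (fun _ => b) < s). destruct Hm as [_ [H2 _]]. rewrite H2. exact Hbs.
    - change (mu (fun y => Rmax (hfun (c j + d/2) (2 * Rabs (s - c j) / d) (y j)) (phiS c d s b S y)) < s).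
      pose proof Hm as [_ [_ [H3 _]]].
      assert (HK : 0 <= 2 * Rabs (s - c j) / d).
      { apply Rmult_le_pos; [|left; apply Rinv_0_lt_compat; auto].
        pose proof (Rabs_pos (s - c j)); lra. }
      rewrite H3.
      + apply Rmax_lub_lt.
        * assert (Hcj : c j < s) by (apply HS; left; auto).
          eapply Rle_lt_trans; [apply (mm_h A); auto|exact Hcj].
          all: try (change (c j < c j + d/2); lra).
        * apply IH; [intros; apply HS; right; auto|apply ed_Ccont, phiS_ed; auto].
      + apply ed_Ccont, (ed_comp1 A (fun y => y j) _ (1 + 2 * Rabs (s - c j) / d));
          [apply ed_proj|lra|apply hfun_lip; auto].
      + apply ed_Ccont, phiS_ed; auto. }
  assert (Hb : forall S y, b <= phiS c d s b S y).
  { induction S0 as [|j S0 IH]; intros y; simpl; [lra|]. eapply Rle_trans; [apply IH|apply Rmax_r]. }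
  assert (Hj : forall S y j, In j S -> c j + d < y j -> s <= phiS c d s b S y).
  { induction S0 as [|j0 S0 IH]; intros y j Hin Hy; [destruct Hin|].
    destruct Hin as [->|Hin]; simpl.
    - eapply Rle_trans; [|apply Rmax_l]. unfold hfun.
      set (K := 2 * Rabs (s - c j) / d).
      assert (EK : K * (d/2) = Rabs (s - c j)) by (unfold K; field; lra).
      assert (HK : 0 <= K) by (pose proof (Rabs_pos (s - c j)); nra).
      assert (Hm1 : d/2 <= Rmax 0 (y j - (c j + d/2))) by (eapply Rle_trans; [|apply Rmax_r]; lra).
      assert (K * (d/2) <= K * Rmax 0 (y j - (c j + d / 2))) by (apply Rmult_le_compat_l; auto).
      pose proof (Rle_abs (s - c j)). lra.
    - eapply Rle_trans; [|apply Rmax_r]. eapply IH; eauto. }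
  eapply Rle_lt_trans; [|exact Hlt].
  apply (mm_cut A mu psi phi s Hm Hpsi Hphi Hlt).
  intros y Hy. destruct (Hcov y Hy) as [Hp|[j [Hin Hjy]]].
  - eapply Rle_trans; [apply Rmin_l|]. eapply Rle_trans; [exact Hp|apply Hb].
  - eapply Rle_trans; [apply Rmin_r|]. eapply Hj; eauto.
Qed.

Lemma fold_max_ge {Ix} (c : Ix -> R) (F : list Ix) j :
  In j F -> c j <= fold_right (fun j r => Rmax (c j) r) 0 F.
Proof.
  induction F as [|a F IH]; intros Hin; [destruct Hin|].
  destruct Hin as [<-|Hin]; simpl; [apply Rmax_l|].
  eapply Rle_trans; [apply IH; auto|apply Rmax_r].
Qed.

Lemma approx {Ix} (A : (Ix -> R) -> Prop) mu (F : list Ix) d :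
  maxmin_convex A -> is_maxmin A (coord_gen Ix) mu -> 0 < d ->
  exists y, A y /\ forall j, In j F -> Rabs (y j - mu (fun z => z j)) <= d.
Proof.
  intros Hconv Hm Hd.
  set (c := fun j => mu (fun z : Ix -> R => z j)).
  assert (P0 : exists x0, A x0 /\ forall j, In j F -> x0 j <= c j + d).
  { apply NNPP; intro N.
    set (M := 1 + fold_right (fun j r => Rmax (c j) r) 0 F).
    assert (HM : forall j, In j F -> c j < M).
    { intros j Hj. pose proof (fold_max_ge c F j Hj). unfold M. lra. }
    assert (H : mu (fun _ => M) < M).
    { apply (bound A mu _ F d (M - 1) M Hm); auto.
      - apply ed_Ccont, ed_const.
      - lra.
      - intros y Hy. right. apply NNPP; intro N2. apply N. exists y. split; auto.
        intros j Hj. apply Rnot_lt_le. intro Hlt. apply N2. exists j; split; auto. }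
    destruct Hm as [_ [H2 _]]. rewrite H2 in H. lra. }
  assert (Pi : forall i, exists xi, A xi /\ c i - d <= xi i /\
                 forall j, In j F -> c j + d < c i -> xi j <= c j + d).
  { intro i. apply NNPP; intro N.
    set (S := filter (fun j => if Rlt_dec (c j + d) (c i) then true else false) F).
    assert (H : mu (fun z => z i) < c i - d/2).
    { apply (bound A mu _ S d (c i - d) (c i - d/2) Hm).
      - apply ed_Ccont, ed_proj.
      - exact Hd.
      - lra.
      - intros j Hj. apply filter_In in Hj. destruct Hj as [Hj Hf].
        destruct Rlt_dec as [r|r]; [|discriminate]. change (c j < c i - d/2). lra.
      - intros y Hy. destruct (Rle_dec (y i) (c i - d)) as [h|h]; [left; exact h|right].
        apply NNPP; intro N2; apply N; exists y; split; [auto|split; [lra|]].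
        intros j Hj Hlt. apply Rnot_lt_le; intro Hgt. apply N2. exists j. split; [|exact Hgt].
        apply filter_In. split; auto. destruct Rlt_dec; [reflexivity|contradiction]. }
    change (c i < c i - d/2) in H. lra. }
  assert (G : forall G : list Ix, exists y, A y /\ (forall j, In j F -> y j <= c j + d) /\
                 (forall j, In j G -> c j - d <= y j)).
  { induction G as [|a G IH].
    - destruct P0 as [x0 [A0 H0]]. exists x0. split; auto. split; auto. intros j [].
    - destruct IH as [y [Ay [Hu Hl]]]. destruct (Pi a) as [xa [Axa [Hxa Hxu]]].
      exists (fun b => Rmax (y b) (Rmin (c a) (xa b))). split; [apply Hconv; auto|split].
      + intros j Hj. apply Rmax_lub; auto. destruct (Rlt_dec (c j + d) (c a)).
        * eapply Rle_trans; [apply Rmin_r|]; auto.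
        * eapply Rle_trans; [apply Rmin_l|]; lra.
      + intros j [<-|Hj].
        * eapply Rle_trans; [|apply Rmax_r]. apply Rmin_glb; lra.
        * eapply Rle_trans; [apply Hl; auto|apply Rmax_l]. }
  destruct (G F) as [y [Ay [Hu Hl]]]. exists y. split; auto.
  intros j Hj. specialize (Hu j Hj). specialize (Hl j Hj). unfold c in *.
  apply Rabs_le. lra.
Qed.

Lemma eps_exists {T} (r : T -> R) (L : list T) :
  exists e, 0 < e /\ forall p, In p L -> 0 < r p -> e <= r p.
Proof.
  induction L as [|a L IH].
  - exists 1. split; [lra|]. intros p [].
  - destruct IH as [e [He H]]. destruct (Rlt_dec 0 (r a)).
    + exists (Rmin e (r a)). split; [apply Rmin_glb_lt; auto|].
      intros p [<-|Hp] Hr; [apply Rmin_r|]. eapply Rle_trans; [apply Rmin_l|auto].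
    + exists e. split; auto. intros p [<-|Hp] Hr; [contradiction|auto].
Qed.

Lemma xi_in {Ix} (A : (Ix -> R) -> Prop) mu :
  maxmin_convex A -> compact_in A (coord_gen Ix) -> is_maxmin A (coord_gen Ix) mu -> A (xi mu).
Proof.
  intros Hconv Hcomp Hm. set (z := xi mu). apply NNPP; intro Nz.
  set (r := fun p : (Ix -> R) * Ix => Rabs (fst p (snd p) - z (snd p)) / 2).
  set (U := fun (p : (Ix -> R) * Ix) (y : Ix -> R) => Rabs (y (snd p) - fst p (snd p)) < r p).
  assert (HU : forall p, open_in A (coord_gen Ix) (U p)).
  { intros p y _ Hy. exists ((fun w => w (snd p)) :: nil), (r p - Rabs (y (snd p) - fst p (snd p))).
    split; [constructor; [exists (snd p); reflexivity|constructor]|split; [unfold U in Hy; lra|]].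
    intros w _ Hw. specialize (Hw _ (or_introl eq_refl)). simpl in Hw. unfold U.
    pose proof (Rabs_triang (w (snd p) - y (snd p)) (y (snd p) - fst p (snd p))) as T.
    replace (w (snd p) - y (snd p) + (y (snd p) - fst p (snd p))) with (w (snd p) - fst p (snd p)) in T by ring.
    lra. }
  assert (Hcov : forall y, A y -> exists p, U p y).
  { intros y Hy. assert (exists a, y a <> z a) as [a Ha].
    { apply NNPP; intro N. apply Nz. replace z with y; auto.
      apply functional_extensionality. intro a. apply NNPP; intro N2. apply N. exists a; auto. }
    exists (y, a). unfold U, r; simpl. replace (y a - y a) with 0 by ring. rewrite Rabs_R0.
    assert (0 < Rabs (y a - z a)) by (apply Rabs_pos_lt; lra). lra. }
  destruct (Hcomp _ U HU Hcov) as [L HL].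
  destruct (eps_exists r L) as [e [He He2]].
  destruct (approx A mu (map snd L) e Hconv Hm He) as [y [Ay Hy]].
  destruct (HL y Ay) as [p [Hp Up]].
  unfold U in Up.
  assert (Hr : 0 < r p) by (pose proof (Rabs_pos (y (snd p) - fst p (snd p))); lra).
  specialize (He2 p Hp Hr).
  specialize (Hy (snd p) (in_map snd L p Hp)).
  change (mu (fun z0 => z0 (snd p))) with (z (snd p)) in Hy.
  pose proof (Rabs_triang (fst p (snd p) - y (snd p)) (y (snd p) - z (snd p))) as T.
  replace (fst p (snd p) - y (snd p) + (y (snd p) - z (snd p))) with (fst p (snd p) - z (snd p)) in T by ring.
  pose proof (Rabs_minus_sym (fst p (snd p)) (y (snd p))) as Es.
  assert (Er : r p = Rabs (fst p (snd p) - z (snd p)) / 2) by reflexivity.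
  lra.
Qed.

Theorem mainTheorem20 (I : Type) (A : (I -> R) -> Prop)
  (Hconv : maxmin_convex A) (Hcomp : compact_in A (coord_gen I)) :
  cont_map (Jdom A (coord_gen I)) (Jgen A (coord_gen I)) A (coord_gen I) (@xi I)
  /\ (forall x, A x -> xi (eta x) = x)
  /\ (forall M, Jdom (Jdom A (coord_gen I)) (Jgen A (coord_gen I)) M ->
        xi (psiJ M) = xi (Jmap (@xi I) M)).
Proof.
  split; [split|split].
  - intros mu Hmu. apply xi_in; auto.
  - intros U HU mu Hmu HUmu.
    destruct (HU (xi mu) (xi_in A mu Hconv Hcomp Hmu) HUmu) as [l [d [Hl [Hd Hy]]]].
    rewrite Forall_forall in Hl.
    exists (map (fun g => fun nu => nu g) l), d. split; [|split; auto].
    + rewrite Forall_forall. intros h Hh. apply in_map_iff in Hh. destruct Hh as [g [<- Hg]].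
      destruct (Hl g Hg) as [a ->]. exists (fun x => x a). split; [|reflexivity].
      apply ed_Ccont, ed_proj.
    + intros nu Hnu Hc. apply Hy; [apply xi_in; auto|].
      intros g Hg. pose proof (Hc _ (in_map (fun g => fun nu => nu g) l g Hg)) as Hc'.
      destruct (Hl g Hg) as [a ->]. exact Hc'.
  - intros x Hx. reflexivity.
  - intros M HM. reflexivity.
Qed.
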